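(* Let $S$ be a string of length $n$ and $1\le\tau\le n$. Let $\mathrm{ID}:[1..n-\tau+1]\to\mathbb{Z}$ be any function such that $\mathrm{ID}(j)$ depends only on $S[j..j+\tau-1]$, i.e. $S[j..j+\tau-1]=S[k..k+\tau-1]$ implies $\mathrm{ID}(j)=\mathrm{ID}(k)$. Define $$P=\left\{j\in[1..n-\tau]\;\middle|\;\exists \ell\in[j-\tau+1..j]:\ \mathrm{ID}(j)=\min_{k\in[\ell..\ell+\tau-1]}\mathrm{ID}(k)\right\}.$$ Then $P$ is a $(2\tau,2\tau)$-partitioning set of $S$.
   Context: $[a..b]=\{a,\dots,b\}$. A prefix of length $y\ge1$ of a string $W$ is a period of $W$ if $W[x]=W[x+y]$ for all $1\le x\le |W|-y$; $\rho_W$ is the shortest period length, and $W$ is periodic if $\rho_W\le |W|/2$. For $1\le\tau'\le\delta\le n$, a set $P\subseteq[n]$ is a $(\tau',\delta)$-partitioning set of $S$ if (1) for any $i,j\in[1+\delta..n-\delta]$ with $S[i-\delta..i+\delta]=S[j-\delta..j+\delta]$ we have $i\in P\Leftrightarrow j\in P$; and (2) for any two consecutive elements $p_i<p_{i+1}$ of $P\cup\{1,n+1\}$, either $p_{i+1}-p_i\le\tau'$, or $p_{i+1}-p_i>\tau'$ and $u=S[p_i..p_{i+1}-1]$ is periodic with $\rho_u\le\tau'$. *)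

(* Defs.v *)
(* Strings are 1-based: a string S of length n over an
   alphabet T is a function S : nat -> T of which only S 1, ..., S n matter. *)
From mathcomp Require Import all_boot all_order all_algebra.
Set Implicit Arguments. Unset Strict Implicit. Unset Printing Implicit Defensive.

(* y is a period of u = S[a..b] (|u| = b - a + 1):
   1 <= y and u[x] = u[x+y] for 1 <= x <= |u| - y,
   i.e. S x = S (x + y) for a <= x and x + y <= b. *)
Definition is_period (T : Type) (S : nat -> T) (a b y : nat) : Prop :=
  1 <= y /\ forall x, a <= x -> x + y <= b -> S x = S (x + y).

Definition shortest_period (T : Type) (S : nat -> T) (a b rho : nat) : Prop :=
  is_period S a b rho /\ forall y, is_period S a b y -> rho <= y.

(* u = S[a..b] is periodic (rho_u <= |u|/2) with rho_u <= t *)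
Definition periodic_with_period_le (T : Type) (S : nat -> T) (a b t : nat) : Prop :=
  exists rho, shortest_period S a b rho /\ 2 * rho <= b.+1 - a /\ rho <= t.

Definition partitioning_set (T : Type) (S : nat -> T) (n tau' delta : nat)
    (P : nat -> Prop) : Prop :=
  (forall p, P p -> 1 <= p <= n) /\
  (forall i j, 1 + delta <= i <= n - delta -> 1 + delta <= j <= n - delta ->
     (forall t, t <= 2 * delta -> S (i - delta + t) = S (j - delta + t)) ->
     (P i <-> P j)) /\
  (let Q := fun p => P p \/ p = 1 \/ p = n.+1 in
   forall a b, Q a -> Q b -> a < b -> (forall c, a < c < b -> ~ Q c) ->
     b - a <= tau' \/ (tau' < b - a /\ periodic_with_period_le S a b.-1 tau')).

(* Main.v *)
Require Import Defs.
From mathcomp Require Import all_boot all_order all_algebra.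
From mathcomp Require Import zify.
Import Order.TTheory GRing.Theory Num.Theory.

Lemma argmin_ex (f : nat -> int) (a m : nat) :
  exists k, a <= k <= a + m /\ forall x, a <= x <= a + m -> (f k <= f x)%R.
Proof.
elim: m => [|m [k [Hk Hmin]]].
  exists a; split; first lia.
  by move=> x Hx; have -> : x = a by lia.
case: (lerP (f k) (f (a + m.+1))) => H.
  exists k; split; first lia.
  move=> x Hx; case: (ltnP x (a + m.+1)) => Hx'.
    apply: Hmin; lia.
  by have -> : x = a + m.+1 by lia.
exists (a + m.+1); split; first lia.
move=> x Hx; case: (ltnP x (a + m.+1)) => Hx'.
  apply: le_trans (ltW H) _; apply: Hmin; lia.
by have -> : x = a + m.+1 by lia.
Qed.

Theorem lemma9 (T : eqType) (S : nat -> T) (n tau : nat) (ID : nat -> int)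
  (Htau : 1 <= tau <= n)
  (HID : forall j k, 1 <= j <= n - tau + 1 -> 1 <= k <= n - tau + 1 ->
     (forall t, t < tau -> S (j + t) = S (k + t)) -> ID j = ID k) :
  partitioning_set S n (2 * tau) (2 * tau)
    (fun j => 1 <= j <= n - tau /\
       exists l, j < l + tau /\ l <= j /\
         (* the window [l..l+tau-1] lies in the domain [1..n-tau+1] of ID *)
         1 <= l /\ l + tau - 1 <= n - tau + 1 /\
         (* ID j = min_{k in [l..l+tau-1]} ID k  (note j lies in the window) *)
         (forall k, l <= k <= l + tau - 1 -> (ID j <= ID k)%R)).
Proof.
set P := (fun j => _).
have one : forall i j, 1 + 2 * tau <= i <= n - 2 * tau ->
    1 + 2 * tau <= j <= n - 2 * tau ->
    (forall t, t <= 2 * (2 * tau) -> S (i - 2 * tau + t) = S (j - 2 * tau + t)) ->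
    P i -> P j.
  move=> i j Hi Hj Hs [Hi1 [l [H1 [H2 [H3 [H4 Hm]]]]]].
  split; first lia.
  exists (j - (i - l)); do 4 (split; first lia).
  have Hij : ID j = ID i.
    apply: HID; [lia|lia|].
    move=> t Ht; have := Hs (2 * tau + t) ltac:(lia).
    have -> : i - 2 * tau + (2 * tau + t) = i + t by lia.
    by have -> : j - 2 * tau + (2 * tau + t) = j + t by lia.
  move=> k Hk; rewrite Hij.
  have -> : ID k = ID (k + i - j).
    apply: HID; [lia|lia|].
    move=> t Ht; have := Hs (k + i - j + t - (i - 2 * tau)) ltac:(lia).
    have -> : i - 2 * tau + (k + i - j + t - (i - 2 * tau)) = k + i - j + t by lia.
    by have -> : j - 2 * tau + (k + i - j + t - (i - 2 * tau)) = k + t by lia.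
  apply: Hm; lia.
split; first by move=> p [Hp _]; lia.
split.
  move=> i j Hi Hj Hs; split; first exact: one.
  apply: one => // t Ht; by rewrite Hs.
move=> Q a b Qa Qb ab Hc; left.
case: (leqP (b - a) (2 * tau)) => // Hgt; exfalso.
have Ha : a <= n - 2 * tau.
  case: Qb => [[Hb _]|[Hb|Hb]]; lia.
have Ha1 : 1 <= a by case: Qa => [[Hb _]|[Hb|Hb]]; lia.
have [k [Hk Hmin]] := argmin_ex ID (a + 1) (tau - 1).
apply: (Hc k); first lia.
left; split; first lia.
exists (a + 1); do 4 (split; first lia).
move=> x Hx; apply: Hmin; lia.
Qed.
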